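(* Let $G$ be a group, $A\subseteq G$ a nonempty finite set and $\epsilon\in(0,1)$. Let $X=\operatorname{St}^\ell_{\epsilon^2/162}(A)$ and fix $\nu\in(0,1)$ with $\nu\leq|X|/|A|$. Set $S=\operatorname{St}^r_{\epsilon\nu/9}(A)$ and $A'=\{a\in A:|Xa\setminus A|<\frac{\epsilon}{9}|X|\}$. If $D\subseteq G$ satisfies $A'\subseteq D\subseteq A'S$, then $|A\triangle D|<\epsilon|A|$.
   Context: $Xa=\{xa:x\in X\}$, $A'S=\{as:a\in A',s\in S\}$, $\triangle$ symmetric difference. For finite $A$ and $\eta\in(0,1)$: $\operatorname{St}^\ell_\eta(A)=\{x\in G:|xA\triangle A|\leq\eta|A|\}$ and $\operatorname{St}^r_\eta(A)=\{x\in G:|Ax\triangle A|\leq\eta|A|\}$. *)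

(* Defs.v *)
From HB Require Import structures.
From mathcomp Require Import all_boot all_order all_algebra.
From mathcomp Require Import monoid.
From mathcomp Require Import finmap.
Set Implicit Arguments. Unset Strict Implicit. Unset Printing Implicit Defensive.
Import Order.TTheory GRing.Theory Num.Theory.
Local Open Scope fset_scope.

Section Defs.
Variable G : groupType.

Definition lmul (x : G) (A : {fset G}) : {fset G} := [fset (x * a)%g | a in A].
Definition rmul (A : {fset G}) (x : G) : {fset G} := [fset (a * x)%g | a in A].
Definition setmul (X A : {fset G}) : {fset G} :=
  [fset (x * a)%g | x in X, a in A].
Definition symdiff (A B : {fset G}) : {fset G} := (A `\` B) `|` (B `\` A).

Variable R : realFieldType.
Definition in_Stl (eta : R) (A : {fset G}) (x : G) : Prop :=
  ((#|` symdiff (lmul x A) A|)%:R <= eta * (#|` A|)%:R)%R.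
Definition in_Str (eta : R) (A : {fset G}) (x : G) : Prop :=
  ((#|` symdiff (rmul A x) A|)%:R <= eta * (#|` A|)%:R)%R.
End Defs.

(* Main.v *)
Require Import Defs.
From HB Require Import structures.
From mathcomp Require Import all_boot all_order all_algebra.
From mathcomp Require Import monoid.
From mathcomp Require Import finmap.
From mathcomp Require Import zify.
From mathcomp Require Import lra.
Import Order.TTheory GRing.Theory Num.Theory.
Local Open Scope fset_scope.

Section H.
Variable G : groupType.
Implicit Types A B C X : {fset G}.

Lemma L0 (E : {fset G}) (p : pred G) :
  \sum_(c <- E) (p c : nat) = #|` [fset c in E | p c]|.
Proof.
by rewrite -big_mkcond /= big_fset_condE card_fset_sum1.
Qed.

Lemma Linj (B C : {fset G}) (h : G -> G) : {in B &, injective h} ->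
  (\sum_(b <- B) ((h b \in C) : nat) <= #|` C|)%N.
Proof.
move=> hi.
have -> : \sum_(b <- B) ((h b \in C) : nat) = \sum_(c <- [fset h b | b in B]) ((c \in C) : nat).
  by rewrite big_imfset.
rewrite L0; apply: fsubset_leq_card; apply/fsubsetP => c; rewrite !inE /=.
by case/andP.
Qed.

Lemma Lr X A a : \sum_(x <- X) ((x * a)%g \notin A : nat) = #|` rmul X a `\` A|.
Proof.
have -> : \sum_(x <- X) ((x * a)%g \notin A : nat) = \sum_(c <- rmul X a) ((c \notin A) : nat).
  by rewrite /rmul big_imfset //= => x y _ _; apply: mulIg.
rewrite L0; congr (#|` _|); apply/fsetP => c; rewrite !inE /=.
by rewrite andbC.
Qed.

Lemma Ll x A : \sum_(a <- A) ((x * a)%g \notin A : nat) = #|` lmul x A `\` A|.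
Proof.
have -> : \sum_(a <- A) ((x * a)%g \notin A : nat) = \sum_(c <- lmul x A) ((c \notin A) : nat).
  by rewrite /lmul big_imfset //= => y z _ _; apply: mulgI.
rewrite L0; congr (#|` _|); apply/fsetP => c; rewrite !inE /=.
by rewrite andbC.
Qed.

Lemma Lsym1 B A : (#|` B `\` A| <= #|` symdiff B A|)%N.
Proof. by apply: fsubset_leq_card; apply: fsubsetUl. Qed.
Lemma Lsym2 B A : (#|` A `\` B| <= #|` symdiff B A|)%N.
Proof. by apply: fsubset_leq_card; apply: fsubsetUr. Qed.

Lemma Lexch1 X A : \sum_(a <- A) #|` rmul X a `\` A| = \sum_(x <- X) #|` lmul x A `\` A|.
Proof.
under eq_bigr do rewrite -Lr.
rewrite exchange_big /=.
by apply: eq_bigr => x _; rewrite Ll.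
Qed.

Lemma Ly X A a s : a \in A -> 
  (#|` X| <= \sum_(x <- X) (((x * (a * s))%g \in A) : nat)
            + #|` rmul X a `\` A| + #|` rmul A s `\` A|)%N.
Proof.
move=> aA.
set C := [fset b in A | (b * s)%g \notin A].
have h1 : (\sum_(x <- X) (((x * a)%g \in C) : nat) <= #|` C|)%N.
  by apply: Linj => x y _ _; apply: mulIg.
have h2 : (#|` C| <= #|` rmul A s `\` A|)%N.
  rewrite card_fset_sum1.
  have -> : \sum_(b <- C) 1 = \sum_(b <- C) (((b * s)%g \in rmul A s `\` A) : nat).
    rewrite big_seq [RHS]big_seq; apply: eq_bigr => b.
    rewrite !inE /= => /andP [bA bs].
    rewrite bs /=.
    suff -> : (b * s)%g \in rmul A s by [].
    by apply/imfsetP; exists b.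
  by apply: Linj => x y _ _; apply: mulIg.
rewrite -(Lr X A a).
have key : (#|` X| <= \sum_(x <- X) (((x * (a * s))%g \in A) : nat)
   + \sum_(x <- X) (((x * a)%g \in C) : nat) + \sum_(x <- X) ((x * a)%g \notin A : nat))%N.
  rewrite card_fset_sum1 -!big_split /=; apply: leq_sum => x _.
  rewrite !inE /= mulgA.
  by case: ((x * a)%g \in A); case: ((x * a * s)%g \in A).
lia.
Qed.

Lemma Lexch2 X A Y : [disjoint Y & A]%fset ->
  (\sum_(y <- Y) \sum_(x <- X) (((x * y)%g \in A) : nat)
    <= \sum_(x <- X) #|` A `\` lmul x A|)%N.
Proof.
move=> dis.
rewrite exchange_big /=; apply: leq_sum => x _.
have -> : \sum_(y <- Y) (((x * y)%g \in A) : nat)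
   = \sum_(y <- Y) (((x * y)%g \in A `\` lmul x A) : nat).
  rewrite big_seq [RHS]big_seq; apply: eq_bigr => y yY.
  rewrite !inE /=; case xyA: ((x * y)%g \in A); rewrite ?andbF ?andbT //=.
  suff -> : (x * y)%g \notin lmul x A by [].
  apply/imfsetP => -[z zA /mulgI e]; subst z.
  by move/fdisjointP: dis => /(_ y yY); rewrite zA.
by apply: Linj => y z _ _; apply: mulgI.
Qed.

Variable R : realFieldType.
Local Open Scope ring_scope.

Lemma Lsumle (E : {fset G}) (f : G -> nat) (c : R) :
  (forall x, x \in E -> (f x)%:R <= c) ->
  (\sum_(x <- E) f x)%N%:R <= (#|` E|)%:R * c.
Proof.
move=> H; rewrite natr_sum card_fset_sum1 natr_sum mulr_suml.
rewrite big_seq [X in _ <= X]big_seq; apply: ler_sum => x xE.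
by rewrite mul1r; apply: H.
Qed.

Lemma Lsumge (E : {fset G}) (P : pred G) (g : G -> nat) (c : R) :
  0 <= c -> (forall x, x \in E -> P x -> c <= (g x)%:R) ->
  (\sum_(x <- E) (P x : nat))%N%:R * c <= (\sum_(x <- E) g x)%N%:R.
Proof.
move=> c0 H; rewrite !natr_sum mulr_suml.
rewrite big_seq [X in _ <= X]big_seq; apply: ler_sum => x xE.
case Px: (P x); first by rewrite mul1r; apply: H.
by rewrite mul0r ler0n.
Qed.

End H.

Local Open Scope ring_scope.

Theorem lemma3p5 (G : groupType) (R : realFieldType)
  (A : {fset G}) (eps nu : R) (X S A' D : {fset G}) :
  A != fset0 ->
  0 < eps < 1 ->
  (forall x : G, x \in X <-> in_Stl (eps ^+ 2 / 162) A x) ->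
  0 < nu < 1 ->
  nu <= (#|` X|)%:R / (#|` A|)%:R ->
  (forall s : G, s \in S <-> in_Str (eps * nu / 9) A s) ->
  (forall a : G, a \in A' <->
     (a \in A /\ (#|` rmul X a `\` A|)%:R < eps / 9 * (#|` X|)%:R)) ->
  A' `<=` D -> D `<=` setmul A' S ->
  (#|` symdiff A D|)%:R < eps * (#|` A|)%:R.
Proof.
move=> An0 /andP[e0 e1] HX /andP[nu0 nu1] hnu HS HA' sA'D sDA'S.
have nAR : 0 < (#|` A|)%:R :> R by rewrite ltr0n cardfs_gt0.
have hnuX : nu * (#|` A|)%:R <= (#|` X|)%:R by rewrite -ler_pdivlMr.
have nXR : 0 < (#|` X|)%:R :> R.
  by apply: lt_le_trans hnuX; apply: mulr_gt0.
set nA := (#|` A|)%:R : R in nAR hnuX *.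
set nX := (#|` X|)%:R : R in nXR hnuX *.
have I1 : (#|` A `\` A'|)%:R * (eps / 9 * nX) <= nX * (eps ^+ 2 / 162 * nA).
  have -> : #|` A `\` A'| = \sum_(a <- A) ((a \notin A') : nat).
    by rewrite L0; congr (#|` _|); apply/fsetP => z; rewrite !inE /= andbC.
  apply: le_trans (@Lsumge G R A (fun a => a \notin A') (fun a => #|` rmul X a `\` A|) _ _ _) _.
  - by apply: mulr_ge0; [lra|exact: ltW].
  - move=> a aA naA'; rewrite leNgt; apply/negP => h.
    by move/negP: naA'; apply; apply/HA'.
  rewrite Lexch1; apply: Lsumle => x xX.
  move/HX: xX; rewrite /in_Stl; apply: le_trans; rewrite ler_nat; exact: Lsym1.
set Y := D `\` A.
have I2 : (#|` Y|)%:R * (7 / 9 * nX) <= nX * (eps ^+ 2 / 162 * nA).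
  rewrite card_fset_sum1.
  apply: le_trans (@Lsumge G R Y (fun _ => true)
     (fun y => (\sum_(x <- X) (((x * y)%g \in A) : nat))%N) _ _ _) _.
  - by apply: mulr_ge0; [lra|exact: ltW].
  - move=> y; rewrite inE => /andP [yA yD] _.
    move/fsubsetP: sDA'S => /(_ y yD) /imfset2P [a aA' [s sS ->]].
    move/HA': aA' => [aA r1].
    move/HS: sS; rewrite /in_Str => r2.
    have r2' := @Lsym1 G (rmul A s) A.
    rewrite -/nX in r1; rewrite -/nA in r2.
    have := @Ly G X A a s aA.
    rewrite -(ler_nat R) !natrD -/nX => hL.
    rewrite -(ler_nat R) in r2'.
    have h3 : eps * (nu * nA) <= eps * nX by apply: ler_wpM2l => //; exact: ltW.
    have h4 : 0 <= nX * (1 - eps) by apply: mulr_ge0; [exact: ltW| lra].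
    nra.
  apply: le_trans (_ : (\sum_(x <- X) #|` A `\` lmul x A|)%N%:R <= _).
    rewrite ler_nat; apply: Lexch2.
    by apply/fdisjointP => y; rewrite inE => /andP[].
  apply: Lsumle => x xX.
  move/HX: xX; rewrite /in_Stl; apply: le_trans; rewrite ler_nat; exact: Lsym2.
have I3 : (#|` symdiff A D| <= #|` A `\` A'| + #|` Y|)%N.
  apply: leq_trans (leq_card_fsetU _ _).1 _.
  by rewrite leq_add2r; apply: fsubset_leq_card; apply: fsetDS.
rewrite -(ler_nat R) natrD in I3.
set a1 := (#|` A `\` A'|)%:R : R in I1 I3.
set y1 := (#|` Y|)%:R : R in I2 I3.
have J1 : a1 * eps / 9 <= eps ^+ 2 / 162 * nA.
  by rewrite -(ler_pM2l nXR); lra.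
have J1' : a1 <= eps * nA / 18.
  by rewrite -(ler_pM2l e0); lra.
have J2 : y1 * 7 / 9 <= eps ^+ 2 / 162 * nA.
  by rewrite -(ler_pM2l nXR); lra.
have h5 : eps ^+ 2 * nA <= eps * nA.
  rewrite expr2 -mulrA; apply: ler_wpM2l; first exact: ltW.
  by rewrite -[X in _ <= X]mul1r ler_pM2r //; exact: ltW.
have h6 : 0 < eps * nA by apply: mulr_gt0.
apply: le_lt_trans I3 _.
lra.
Qed.
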